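(* Let $\mathcal{X},\mathcal{Y}$ be finite-dimensional real Hilbert spaces, $\mathcal{A}:\mathcal{X}\to\mathcal{Y}$ linear, $\mathcal{R}:\mathcal{X}\to\mathbb{R}$ $\rho$-weakly convex, and $F:\mathcal{Y}\to\mathbb{R}\cup\{+\infty\}$ proper, convex and lower semicontinuous with convex conjugate $F^*$ being $\mu$-strongly convex. Let $(z^k)=(x^k,y^k)$ be generated by the PDHGM iteration with $\vartheta=1$ and step sizes $\tau,\sigma>0$ satisfying $\tau\sigma\|\mathcal{A}\|^2<1$, $\tau\rho<1$ and $\mu\sigma>3$. Then for every $k\ge1$, \[ \mathcal{L}(z^{k},z^{k-1})-\mathcal{L}(z^{k+1},z^{k})\geqslant \frac{1}{2}(\mu\sigma-3)\|y^{k}-y^{k+1}\|_{M}^2 +\frac{1}{2}(1-\rho\tau)\|x^{k}-x^{k+1}\|_{M}^2 . \]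
   Context: $f$ is $\rho$-weakly convex ($\rho\ge0$) if $f+\frac{\rho}{2}\|\cdot\|^2$ is convex, and $\mu$-strongly convex ($\mu>0$) if $f-\frac{\mu}{2}\|\cdot\|^2$ is convex. $F^*(y)=\sup_{w\in\mathcal{Y}}\{\langle y,w\rangle-F(w)\}$. $\mathcal{A}^*$ is the adjoint and $\|\mathcal{A}\|$ the operator norm. The saddle function is $L(x,y)=\mathcal{R}(x)+\langle\mathcal{A}x,y\rangle_{\mathcal{Y}}-F^*(y)$. PDHGM with $\vartheta=1$: from $z^0=(x^0,y^0)$, $x^{k+1}=\operatorname{argmin}_x\{\mathcal{R}(x)+\langle y^k,\mathcal{A}x\rangle+\frac{1}{2\tau}\|x-x^k\|^2\}$, $x_\vartheta^{k+1}=x^{k+1}+(x^{k+1}-x^k)$, $y^{k+1}=\operatorname{argmin}_y\{F^*(y)-\langle y,\mathcal{A}x_\vartheta^{k+1}\rangle+\frac{1}{2\sigma}\|y-y^k\|^2\}$. For $z=(x,y)$, $\|z\|_M^2=\frac1\tau\|x\|^2-2\langle\mathcal{A}x,y\rangle+\frac1\sigma\|y\|^2$ (i.e. $\langle z,Mz\rangle$ with $M=\begin{pmatrix}\frac1\tau I&-\mathcal{A}^*\\-\mathcal{A}&\frac1\sigma I\end{pmatrix}$); for $x\in\mathcal{X}$, $\|x\|_M=\|x\|/\sqrt\tau$, and for $y\in\mathcal{Y}$, $\|y\|_M=\|y\|/\sqrt\sigma$. The Lyapunov function is $\mathcal{L}(z,z')=L(z)+\frac12\|z'-z\|_M^2$.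 *)

(* Defs.v *)
From HB Require Import structures.
From mathcomp Require Import all_boot all_order all_algebra.
From mathcomp Require Import all_classical all_reals all_analysis.
Set Implicit Arguments. Unset Strict Implicit. Unset Printing Implicit Defensive.
Import Order.TTheory GRing.Theory Num.Theory.
Import numFieldNormedType.Exports.
Local Open Scope classical_set_scope.
Local Open Scope ring_scope.

(* Finite-dimensional real Hilbert spaces are modelled as column vectors
   'cV[R]_n with the standard (Euclidean) inner product. *)
Section Defs.
Variable R : realType.

Definition dotv (n : nat) (u v : 'cV[R]_n) : R := \sum_(i < n) u i 0 * v i 0.

Definition normv (n : nat) (u : 'cV[R]_n) : R := Num.sqrt (dotv u u).

Definition opnorm (m n : nat) (A : 'M[R]_(m, n)) : R :=
  sup [set normv (A *m x) | x in [set x : 'cV[R]_n | normv x <= 1]].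

Definition convex_fun (n : nat) (f : 'cV[R]_n -> R) : Prop :=
  forall (x y : 'cV[R]_n) (t : R), 0 <= t <= 1 ->
    f (t *: x + (1 - t) *: y) <= t * f x + (1 - t) * f y.

Definition convex_efun (n : nat) (f : 'cV[R]_n -> \bar R) : Prop :=
  forall (x y : 'cV[R]_n) (t : R), 0 <= t <= 1 ->
    (f (t *: x + (1 - t) *: y)%R <= t%:E * f x + (1 - t)%R%:E * f y)%E.

Definition weakly_convex (n : nat) (rho : R) (f : 'cV[R]_n -> R) : Prop :=
  convex_fun (fun x => f x + rho / 2 * normv x ^+ 2).

Definition strongly_convex_e (n : nat) (mu : R) (f : 'cV[R]_n -> \bar R) : Prop :=
  convex_efun (fun x => (f x - (mu / 2 * normv x ^+ 2)%R%:E)%E).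

Definition proper_efun (n : nat) (f : 'cV[R]_n -> \bar R) : Prop :=
  (forall x, f x != -oo%E) /\ exists x, f x != +oo%E.

Definition conjugate (n : nat) (F : 'cV[R]_n -> \bar R) (y : 'cV[R]_n) : \bar R :=
  ereal_sup [set ((dotv y w)%:E - F w)%E | w in [set: 'cV[R]_n]].

Definition saddleL (m n : nat) (Rf : 'cV[R]_n -> R) (A : 'M[R]_(m, n))
  (Fs : 'cV[R]_m -> \bar R) (z : 'cV[R]_n * 'cV[R]_m) : \bar R :=
  ((Rf z.1 + dotv (A *m z.1) z.2)%:E - Fs z.2)%E.

Definition normM2 (m n : nat) (A : 'M[R]_(m, n)) (tau sigma : R)
  (z : 'cV[R]_n * 'cV[R]_m) : R :=
  tau^-1 * normv z.1 ^+ 2 - 2 * dotv (A *m z.1) z.2 + sigma^-1 * normv z.2 ^+ 2.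

Definition lyap (m n : nat) (Rf : 'cV[R]_n -> R) (A : 'M[R]_(m, n))
  (Fs : 'cV[R]_m -> \bar R) (tau sigma : R)
  (z z' : 'cV[R]_n * 'cV[R]_m) : \bar R :=
  (saddleL Rf A Fs z + (normM2 A tau sigma (z'.1 - z.1, z'.2 - z.2) / 2)%:E)%E.

(* PDHGM iteration with theta = 1: the iterates are minimizers of the subproblems *)
Definition pdhgm (m n : nat) (Rf : 'cV[R]_n -> R) (A : 'M[R]_(m, n))
  (Fs : 'cV[R]_m -> \bar R) (tau sigma : R)
  (x : nat -> 'cV[R]_n) (y : nat -> 'cV[R]_m) : Prop :=
  forall k : nat,
    (forall x' : 'cV[R]_n,
       Rf (x k.+1) + dotv (y k) (A *m x k.+1) + (2 * tau)^-1 * normv (x k.+1 - x k) ^+ 2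
       <= Rf x' + dotv (y k) (A *m x') + (2 * tau)^-1 * normv (x' - x k) ^+ 2)
    /\
    (let xt := x k.+1 + (x k.+1 - x k) in
     forall y' : 'cV[R]_m,
       (Fs (y k.+1) - (dotv (y k.+1) (A *m xt))%R%:E
          + ((2 * sigma)^-1 * normv (y k.+1 - y k) ^+ 2)%R%:E
       <= Fs y' - (dotv y' (A *m xt))%R%:E
          + ((2 * sigma)^-1 * normv (y' - y k) ^+ 2)%R%:E)%E).

End Defs.

(* Main.v *)
Require Import Defs.
From HB Require Import structures.
From mathcomp Require Import all_boot all_order all_algebra.
From mathcomp Require Import all_classical all_reals all_analysis.
From mathcomp Require Import ring lra.
Import Order.TTheory GRing.Theory Num.Theory.
Import numFieldNormedType.Exports.
Local Open Scope classical_set_scope.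
Local Open Scope ring_scope.


Section Vec.
Context {R : realType}.
Implicit Types (k : nat).

Lemma dotvC {k} (u v : 'cV[R]_k) : dotv u v = dotv v u.
Proof. by apply: eq_bigr => i _; rewrite mulrC. Qed.

Lemma dotvDl {k} (u v w : 'cV[R]_k) : dotv (u + v) w = dotv u w + dotv v w.
Proof. rewrite /dotv -big_split /=; apply: eq_bigr => i _; by rewrite !mxE mulrDl. Qed.

Lemma dotvZl {k} a (u w : 'cV[R]_k) : dotv (a *: u) w = a * dotv u w.
Proof. rewrite /dotv mulr_sumr; apply: eq_bigr => i _; by rewrite !mxE mulrA. Qed.

Lemma dotvNl {k} (u w : 'cV[R]_k) : dotv (- u) w = - dotv u w.
Proof. by rewrite -scaleN1r dotvZl mulN1r. Qed.

Lemma dotvBl {k} (u v w : 'cV[R]_k) : dotv (u - v) w = dotv u w - dotv v w.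
Proof. by rewrite dotvDl dotvNl. Qed.

Lemma dotvDr {k} (u v w : 'cV[R]_k) : dotv w (u + v) = dotv w u + dotv w v.
Proof. by rewrite dotvC dotvDl !(dotvC w). Qed.
Lemma dotvZr {k} a (u w : 'cV[R]_k) : dotv w (a *: u) = a * dotv w u.
Proof. by rewrite dotvC dotvZl dotvC. Qed.
Lemma dotvNr {k} (u w : 'cV[R]_k) : dotv w (- u) = - dotv w u.
Proof. by rewrite dotvC dotvNl dotvC. Qed.
Lemma dotvBr {k} (u v w : 'cV[R]_k) : dotv w (u - v) = dotv w u - dotv w v.
Proof. by rewrite dotvDr dotvNr. Qed.

Lemma dotv0l {k} (u : 'cV[R]_k) : dotv 0 u = 0.
Proof. by rewrite /dotv big1 // => i _; rewrite mxE mul0r. Qed.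
Lemma dotv0r {k} (u : 'cV[R]_k) : dotv u 0 = 0.
Proof. by rewrite dotvC dotv0l. Qed.

Lemma dotv_ge0 {k} (u : 'cV[R]_k) : 0 <= dotv u u.
Proof. by apply: sumr_ge0 => i _; rewrite -expr2 sqr_ge0. Qed.

Lemma normv2 {k} (u : 'cV[R]_k) : normv u ^+ 2 = dotv u u.
Proof. by rewrite /normv sqr_sqrtr // dotv_ge0. Qed.

Lemma normv_ge0 {k} (u : 'cV[R]_k) : 0 <= normv u.
Proof. exact: sqrtr_ge0. Qed.

Lemma coord_le {k} (u : 'cV[R]_k) i : (u i 0) ^+ 2 <= dotv u u.
Proof.
rewrite /dotv (bigD1 i) //= -expr2 lerDl; apply: sumr_ge0 => j _.
by rewrite -expr2 sqr_ge0.
Qed.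

Lemma coord_abs_le {k} (u : 'cV[R]_k) i : `|u i 0| <= normv u.
Proof.
rewrite /normv -sqrtr_sqr ler_wsqrtr //; exact: coord_le.
Qed.

Lemma normvZ {k} a (u : 'cV[R]_k) : normv (a *: u) = `|a| * normv u.
Proof.
rewrite /normv dotvZl dotvZr mulrA -expr2 sqrtrM ?sqr_ge0 //.
by rewrite sqrtr_sqr.
Qed.

Lemma opnorm_has_sup {m n} (A : 'M[R]_(m, n)) :
  has_sup [set normv (A *m x) | x in [set x : 'cV[R]_n | normv x <= 1]].
Proof.
split.
  exists (normv (A *m 0)), 0 => //=.
  by rewrite /normv dotv0l sqrtr0 ler01.
pose c i := \sum_(j < n) `|A i j|.
exists (Num.sqrt (\sum_(i < m) c i ^+ 2)) => _ [z /= hz <-].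
rewrite /normv ler_wsqrtr //.
apply: ler_sum => i _; rewrite -expr2.
have h1 : `|(A *m z) i 0| <= c i.
  rewrite mxE; apply: le_trans (ler_norm_sum _ _ _) _.
  apply: ler_sum => j _; rewrite normrM.
  have := coord_abs_le z j => hj.
  have hA := normr_ge0 (A i j).
  have hz0 := normr_ge0 (z j 0).
  by rewrite -[X in _ <= X]mulr1; apply: ler_pM => //; apply: le_trans hj hz.
have h0 := normr_ge0 ((A *m z) i 0).
rewrite -[X in X <= _]real_normK ?num_real //.
by rewrite ler_pXn2r // ?nnegrE //; apply: le_trans h0 h1.
Qed.

Lemma opnorm_ge0 {m n} (A : 'M[R]_(m, n)) : 0 <= opnorm A.
Proof.
apply: le_trans (normv_ge0 (A *m 0)) _.
apply: sup_upper_bound; first exact: opnorm_has_sup.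
by exists 0 => //=; rewrite /normv dotv0l sqrtr0 ler01.
Qed.

Lemma opnorm_le {m n} (A : 'M[R]_(m, n)) w : normv (A *m w) <= opnorm A * normv w.
Proof.
apply/ler_addgt0Pr => e e0.
have ho := opnorm_ge0 A.
have hq : 0 < e / (opnorm A + 1) by apply: divr_gt0 => //; lra.
set s := normv w + e / (opnorm A + 1).
have hp : 0 < s by rewrite /s; have := normv_ge0 w; lra.
have H : s^-1 * normv (A *m w) <= opnorm A.
  have -> : s^-1 * normv (A *m w) = normv (A *m (s^-1 *: w)).
    by rewrite -scalemxAr normvZ ger0_norm // invr_ge0 ltW.
  apply: sup_upper_bound; first exact: opnorm_has_sup.
  exists (s^-1 *: w) => //=.
  rewrite normvZ ger0_norm ?invr_ge0 ?(ltW hp) //.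
  rewrite mulrC ler_pdivrMr // mul1r /s; lra.
move: H; rewrite mulrC ler_pdivrMr // => H.
apply: le_trans H _.
rewrite /s mulrDr lerD2l mulrA ler_pdivrMr; last lra.
nra.
Qed.

Lemma opnorm_sq {m n} (A : 'M[R]_(m, n)) w :
  dotv (A *m w) (A *m w) <= opnorm A ^+ 2 * dotv w w.
Proof.
rewrite -!normv2 -exprMn.
have h := opnorm_le A w. have h0 := normv_ge0 (A *m w).
by rewrite ler_pXn2r // nnegrE //; apply: le_trans h.
Qed.

End Vec.


Section SM.
Context {R : realType}.

Lemma lim_t (a b : R) : 0 <= b -> (forall t, 0 < t -> t < 1 -> b * (1 - t) <= a) -> b <= a.
Proof.
move=> b0 H.
have h12 : (0:R) < 1/2 by lra.
have h12' : (1/2:R) < 1 by lra.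
rewrite leNgt; apply/negP => ab.
have [be|bn0] := eqVneq b 0.
  by rewrite be in ab H; have := H (1/2) h12 h12'; rewrite mul0r; lra.
have bp : 0 < b by rewrite lt_def bn0 b0.
have := H ((b - a) / (2 * b)).
have h1 : 0 < (b - a) / (2 * b) by apply: divr_gt0; lra.
have h2 : (b - a) / (2 * b) < 1.
  rewrite ltr_pdivrMr; last lra.
  have : 0 <= a.
    by have := H (1/2) h12 h12'; nra.
  lra.
move=> /(_ h1 h2).
have -> : b * (1 - (b - a) / (2 * b)) = (a + b) / 2.
  by field; lra.
lra.
Qed.

Lemma normv_comb {k} (w p : 'cV[R]_k) t :
  normv (t *: w + (1 - t) *: p) ^+ 2 =
  t * normv w ^+ 2 + (1 - t) * normv p ^+ 2 - t * (1 - t) * normv (w - p) ^+ 2.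
Proof.
rewrite !normv2 !(dotvDl, dotvZl, dotvDr, dotvZr, dotvBl, dotvBr, dotvNl, dotvNr) (dotvC p w).
ring.
Qed.

Definition affine_fun {k} (L : 'cV[R]_k -> R) :=
  forall u v t, L (t *: u + (1 - t) *: v) = t * L u + (1 - t) * L v.

Lemma strong_min {k} (h : 'cV[R]_k -> \bar R) (L : 'cV[R]_k -> R) (be : R)
  (p w : 'cV[R]_k) (hp hw : R) :
  convex_efun h -> (forall u, h u != -oo%E) -> affine_fun L -> 0 <= be ->
  h p = hp%:E -> h w = hw%:E ->
  (forall u, ((hp + be / 2 * normv p ^+ 2 + L p)%:E <=
              h u + (be / 2 * normv u ^+ 2 + L u)%:E)%E) ->
  hp + be / 2 * normv p ^+ 2 + L p + be / 2 * normv (w - p) ^+ 2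
    <= hw + be / 2 * normv w ^+ 2 + L w.
Proof.
move=> hc hn hL be0 hpE hwE hmin.
suff : be / 2 * normv (w - p) ^+ 2 <=
   (hw + be / 2 * normv w ^+ 2 + L w) - (hp + be / 2 * normv p ^+ 2 + L p) by lra.
apply: lim_t; first by apply: mulr_ge0; [lra| exact: sqr_ge0].
move=> t t0 t1.
have tt : 0 <= t <= 1 by apply/andP; split; lra.
have hcv := hc w p t tt.
rewrite hwE hpE in hcv.
move: (hmin (t *: w + (1 - t) *: p)).
move: hcv (hn (t *: w + (1 - t) *: p)).
case: (h (t *: w + (1 - t) *: p)) => [hu| |] //=.
- rewrite -!EFinM -EFinD !lee_fin => h1 _.
  rewrite normv_comb hL => h2.
  rewrite -(ler_pM2l t0).
  lra.
Qed.

End SM.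


Section Sep.
Context {R : realType}.

Lemma ball_coord {k} (x0 y : 'cV[R]_k) (e : R) :
  0 < e -> normv (y - x0) < e -> ball x0 e y.
Proof.
move=> e0 hn; split => // i j; rewrite (ord1 j) /ball /=.
by rewrite -normrN opprB; apply: le_lt_trans hn; have := coord_abs_le (y - x0) i; rewrite !mxE.
Qed.

Lemma cvg_coord (c : nat -> R) :
  (forall k l, (c k - c l) ^+ 2 <= 4 * (k.+1%:R^-1 + l.+1%:R^-1)) -> cvg (c @ \oo).
Proof.
move=> H; apply/cauchy_cvgP; apply: cauchy_exP => eps' eps0'.
have [eps [-> eps0]] : exists e : R, eps' = e /\ 0 < e by exists eps'.
have e2 : 0 < eps ^+ 2 / 8 by apply: divr_gt0 => //; exact: exprn_gt0.
have [N _ hN] := near_infty_natSinv_lt (PosNum e2).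
exists (c N); exists N => // k /= hk.
rewrite /ball /=.
have h1 : N.+1%:R^-1 < (eps : R) ^+ 2 / 8 :> R := hN N (leqnn N).
have h2 : k.+1%:R^-1 <= N.+1%:R^-1 :> R.
  by rewrite lef_pV2 ?posrE ?ltr0Sn // ler_nat ltnS.
have h3 : (c N - c k) ^+ 2 <= 4 * (N.+1%:R^-1 + k.+1%:R^-1) :> R := H N k.
have h4 : `|c N - c k| ^+ 2 < (eps : R) ^+ 2 :> R.
  rewrite real_normK ?num_real //; move: h1 h2 h3; generalize (N.+1%:R^-1 : R) (k.+1%:R^-1 : R) => a b *; lra.
by move: h4; rewrite ltr_pXn2r // nnegrE ltW.
Qed.

Lemma conj_affine {m} (F : 'cV[R]_m -> \bar R) :
  proper_efun F -> convex_efun F -> lower_semicontinuous F ->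
  exists y0 c, forall w, ((dotv y0 w)%:E - F w <= c%:E)%E.
Proof.
move=> [Fn [x0 Fx0]] Fc Fl.
have [f0 Hf0] : exists f0, F x0 = f0%:E.
  by move: (Fn x0) Fx0; case: (F x0) => // r _ _; exists r.
have [V hV hVF] : exists2 V, nbhs x0 V & forall y, V y -> ((f0 - 1)%:E < F y)%E.
  by apply: Fl; rewrite Hf0 lte_fin; lra.
move/nbhs_ballP: hV => [e /= e0 hball].
have hloc : forall y, normv (y - x0) < e -> ((f0 - 1)%:E < F y)%E.
  by move=> y hy; apply: hVF; apply: hball; apply: ball_coord.
have hcone : forall w, (((f0 - 1) - normv (w - x0) * (2 / e))%:E <= F w)%E.
  move=> w.
  have hr := normv_ge0 (w - x0).
  have [hlt|hge] := ltP (normv (w - x0)) e.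
    apply: le_trans (ltW (hloc w hlt)); rewrite lee_fin.
    have : 0 <= normv (w - x0) * (2 / e).
      by apply: mulr_ge0 => //; apply: divr_ge0 => //; lra.
    lra.
  move: (Fn w); case Hw: (F w) => [fw| |] // _; last by rewrite leey.
  move: hr hge; set r := normv (w - x0) => hr hge.
  have rp : 0 < r by apply: lt_le_trans hge.
  pose t := e / (2 * r).
  have t0 : 0 < t by apply: divr_gt0 => //; lra.
  have t1 : t <= 1 by rewrite /t ler_pdivrMr; lra.
  have htr : t * r = e / 2 by rewrite /t; field; rewrite gt_eqF.
  have hu : normv (t *: w + (1 - t) *: x0 - x0) < e.
    have -> : t *: w + (1 - t) *: x0 - x0 = t *: (w - x0).
      by apply/matrixP => i j; rewrite !mxE; ring.
    rewrite normvZ ger0_norm ?ltW // -/r htr; lra.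
  have h1 := hloc _ hu.
  have h2 := Fc w x0 t (introT andP (conj (ltW t0) t1)).
  have := lt_le_trans h1 h2; rewrite Hw Hf0 -!EFinM -EFinD lte_fin => h3.
  rewrite lee_fin -(ler_pM2l t0).
  have htr2 : t * (r * (2 / e)) = 1 by rewrite mulrA htr; field; rewrite gt_eqF.
  move: htr2 h3; generalize (2 / e) => ie; nra.
pose G w := (F w + (1/2 * normv (w - x0) ^+ 2)%:E)%E.
pose gl := f0 - 1 - 2 * e^-1 ^+ 2.
have hGl : forall w, (gl%:E <= G w)%E.
  move=> w; rewrite /G; have := hcone w; move: (Fn w).
  case: (F w) => [fw| |] // _; last by move=> _; rewrite /= leey.
  rewrite -EFinD !lee_fin => h.
  have {h} h : f0 - 1 - normv (w - x0) * (2 / e) <= fw := h.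
  have := sqr_ge0 (normv (w - x0) - 2 * e^-1).
  rewrite /gl; move: h; generalize (normv (w - x0)) => r h hsq.
  move: (e^-1) h hsq => ie h hsq; nra.
pose S := [set r : R | exists w, G w = r%:E].
have S0 : S (f0 + 1/2 * normv (x0 - x0) ^+ 2) by exists x0; rewrite /G Hf0.
have Slb : lbound S gl by move=> r [w hw]; have := hGl w; rewrite hw lee_fin.
have Shi : has_inf S by split; [exists (f0 + 1/2 * normv (x0 - x0) ^+ 2) | exists gl].
pose g := inf S.
have gle : forall r, S r -> g <= r by move=> r Sr; exact: (ge_inf Shi.2).
have gin : forall w, (g%:E <= G w)%E.
  move=> w; have := hGl w; case Hg: (G w) => [r| |] // _; last exact: leey.
  by rewrite lee_fin; apply: gle; exists w.
have hseq : forall k : nat, exists wr : 'cV[R]_m * R,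
    G wr.1 = wr.2%:E /\ wr.2 < g + k.+1%:R^-1.
  move=> k; have hk : 0 < k.+1%:R^-1 :> R by rewrite invr_gt0 ltr0Sn.
  have [r [w hw] hr] := @inf_adherent _ S (k.+1%:R^-1) hk Shi.
  by exists (w, r).
case: (choice hseq) => wr Hwr.
pose w k := (wr k).1. pose r k := (wr k).2.
have Fw : forall k, F (w k) = (r k - 1/2 * normv (w k - x0) ^+ 2)%:E.
  move=> k; have [h1 _] := Hwr k; move: h1; rewrite /G /w /r.
  case: (F (wr k).1) => [f| |] //= h.
  by move: h; rewrite -EFinD => -[<-]; rewrite addrK.
have hr : forall k, r k < g + k.+1%:R^-1 by move=> k; exact: (Hwr k).2.
have hcau : forall k l, normv (w k - w l) ^+ 2 <= 4 * (k.+1%:R^-1 + l.+1%:R^-1).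
  move=> k l.
  have h12a : (0:R) <= 1/2 by lra.
  have h12b : (1/2:R) <= 1 by lra.
  have h12 := introT andP (conj h12a h12b).
  set mid := (1/2 : R) *: w k + (1 - 1/2) *: w l.
  have hc := Fc (w k) (w l) (1/2) h12.
  rewrite !Fw -!EFinM -EFinD in hc.
  have := gin mid; rewrite /G.
  move: hc (Fn mid); rewrite -/mid.
  case: (F mid) => [fm| |] //; rewrite ?lee_fin => hc _.
  move=> hg.
  have hmid : mid - x0 = (1/2 : R) *: (w k - x0) + (1 - 1/2) *: (w l - x0).
    by apply/matrixP => i j; rewrite !mxE; ring.
  have hd : (w k - x0) - (w l - x0) = w k - w l.
    by apply/matrixP => i j; rewrite !mxE; ring.
  rewrite hmid normv_comb hd in hg.
  have hk := hr k; have hl := hr l.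
  move: hc hg hk hl.
  set a := k.+1%:R^-1; set b := l.+1%:R^-1; clearbody a b.
  generalize (normv (w k - w l) ^+ 2) (normv (w k - x0) ^+ 2) (normv (w l - x0) ^+ 2) (r k) (r l).
  move=> *; lra.
have hcv : forall i, cvg ((fun k => w k i 0) @ \oo).
  move=> i; apply: cvg_coord => k l.
  have := coord_le (w k - w l) i; rewrite -normv2 !mxE => h.
  exact: le_trans h (hcau k l).
pose p : 'cV[R]_m := \col_i lim ((fun k => w k i 0) @ \oo).
have hp : forall i, (fun k => w k i 0) @ \oo --> p i 0.
  by move=> i; rewrite mxE; exact: hcv i.
have Eq : forall v : 'cV[R]_m, normv (v - x0) ^+ 2
    = \sum_(i < m) ((v i 0 - x0 i 0) * (v i 0 - x0 i 0)).
  by move=> v; rewrite normv2 /dotv; apply: eq_bigr => i _; rewrite !mxE.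
have hq : (fun k => normv (w k - x0) ^+ 2) @ \oo --> normv (p - x0) ^+ 2.
  rewrite Eq; under eq_cvg do rewrite Eq.
  apply: (cvg_big add_continuous) => i _.
  by apply: cvgM; apply: cvgB => //; exact: cvg_cst.
have hFp : forall eta, 0 < eta ->
    (F p <= (g - 1/2 * normv (p - x0) ^+ 2 + eta)%:E)%E.
  move=> eta eta0; rewrite leNgt; apply/negP => hlt.
  have [V' hV' hV'F] := Fl p _ hlt.
  move/nbhs_ballP: hV' => [e' /= e'0 hb'].
  have ev1 : \forall k \near \oo, forall i, ball (p i 0) e' (w k i 0).
    apply: filter_forall => i.
    exact: (hp i) _ (nbhsx_ballx _ _ e'0).
  have ev2 : \forall k \near \oo,
      `|normv (p - x0) ^+ 2 - normv (w k - x0) ^+ 2| < eta.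
    exact: (cvgr_dist_lt _ _ hq _ eta0).
  have eta2 : 0 < eta / 2 by lra.
  have ev3 : \forall k \near \oo, k.+1%:R^-1 < eta / 2.
    exact: (near_infty_natSinv_lt (PosNum eta2)).
  have [N _ hN] := filterI ev1 (filterI ev2 ev3).
  have [h1 [h2 h3]] := hN N (leqnn N).
  have hV : V' (w N).
    apply: hb'; split => // i j; rewrite (ord1 j); exact: h1.
  have := hV'F _ hV; rewrite Fw lte_fin => h4.
  have h5 := hr N.
  move: h2 h3 h4 h5.
  set a := N.+1%:R^-1; clearbody a.
  generalize (normv (p - x0) ^+ 2) (normv (w N - x0) ^+ 2) (r N) => P Q rN h2 h3 h4 h5.
  have := ler_norm (P - Q); lra.
have [fp Hfp] : exists fp, F p = fp%:E.
  move: (hFp 1 ltr01) (Fn p); case: (F p) => [f| |] // _ _; by exists f.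
have hgp : fp + 1/2 * normv (p - x0) ^+ 2 <= g.
  apply/ler_addgt0Pr => eta eta0; have := hFp eta eta0; rewrite Hfp lee_fin; lra.
pose L := fun v : 'cV[R]_m => - dotv v x0 + 1/2 * normv x0 ^+ 2.
have hLa : affine_fun L.
  by move=> u v t; rewrite /L !(dotvDl, dotvZl); ring.
have hGq : forall v, 1/2 * normv (v - x0) ^+ 2 = 1/2 * normv v ^+ 2 + L v.
  move=> v; rewrite /L !normv2 !(dotvBl, dotvBr, dotvDl, dotvDr, dotvNl, dotvNr) (dotvC x0 v); lra.
have hmin : forall u, ((fp + 1/2 * normv p ^+ 2 + L p)%:E
    <= F u + (1/2 * normv u ^+ 2 + L u)%:E)%E.
  move=> u; rewrite -hGq; apply: le_trans (gin u); rewrite lee_fin.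
  by have := hGq p; lra.
exists (x0 - p), (- (fp + dotv p p - dotv p x0)) => v.
move: (Fn v); case Hv: (F v) => [fv| |] // _.
  have := @strong_min _ _ F L 1 p v fp fv Fc Fn hLa ler01 Hfp Hv hmin.
  rewrite /L !normv2 !(dotvBl, dotvBr, dotvDl, dotvDr, dotvNl, dotvNr) ?(dotvC x0 v) ?(dotvC x0 p) ?(dotvC p v).
  by rewrite -EFinB lee_fin => h; lra.
by rewrite /= leNye.
Qed.

End Sep.


Section Steps.
Context {R : realType}.

Lemma efin_conv (a b c t : R) : a <= t * b + (1 - t) * c ->
  (a%:E <= t%:E * b%:E + (1 - t)%:E * c%:E)%E.
Proof. by rewrite -lee_fin EFinD !EFinM. Qed.

Lemma efin_addle (a b c : R) : a <= b + c -> (a%:E <= b%:E + c%:E)%E.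
Proof. by move=> h /=; rewrite lee_fin. Qed.

Lemma xstep {m n} (A : 'M[R]_(m, n)) (Rf : 'cV[R]_n -> R) (rho tau : R)
  (yk : 'cV[R]_m) (xk p w : 'cV[R]_n) :
  0 < tau -> tau * rho < 1 -> weakly_convex rho Rf ->
  (forall x', Rf p + dotv yk (A *m p) + (2 * tau)^-1 * normv (p - xk) ^+ 2
       <= Rf x' + dotv yk (A *m x') + (2 * tau)^-1 * normv (x' - xk) ^+ 2) ->
  Rf p + dotv yk (A *m p) + (2 * tau)^-1 * normv (p - xk) ^+ 2
    + (tau^-1 - rho) / 2 * normv (w - p) ^+ 2
  <= Rf w + dotv yk (A *m w) + (2 * tau)^-1 * normv (w - xk) ^+ 2.
Proof.
move=> t0 tr wc hmin.
pose h := fun v => (Rf v + rho / 2 * normv v ^+ 2)%:E.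
pose L := fun v => dotv yk (A *m v) - tau^-1 * dotv v xk + (2 * tau)^-1 * normv xk ^+ 2
.
have hc : convex_efun h.
  move=> u v t ht; apply: efin_conv; exact: wc.
have hn : forall u, h u != -oo%E by [].
have hL : affine_fun L.
  move=> u v t; rewrite /L mulmxDr -!scalemxAr !(dotvDr, dotvZr, dotvDl, dotvZl); ring.
have be0 : 0 <= tau^-1 - rho.
  have : rho < tau^-1 by rewrite -(ltr_pM2l t0) mulfV ?gt_eqF.
  lra.
have hQ : forall v, (2 * tau)^-1 * normv (v - xk) ^+ 2 =
    (tau^-1 - rho) / 2 * normv v ^+ 2 + rho / 2 * normv v ^+ 2
    - dotv yk (A *m v) + L v.
  move=> v; rewrite /L !normv2 !(dotvBl, dotvBr) (dotvC xk v).
  by rewrite invfM; lra.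
have hm : forall u, ((Rf p + rho / 2 * normv p ^+ 2 +
     (tau^-1 - rho) / 2 * normv p ^+ 2 + L p)%:E <=
    h u + ((tau^-1 - rho) / 2 * normv u ^+ 2 + L u)%:E)%E.
  move=> u; rewrite /h; apply: efin_addle.
  have := hmin u; have := hQ u; have := hQ p; lra.
have := @strong_min _ _ h L (tau^-1 - rho) p w (Rf p + rho / 2 * normv p ^+ 2)
   (Rf w + rho / 2 * normv w ^+ 2) hc hn hL be0 erefl erefl hm.
have := hQ p; have := hQ w; lra.
Qed.

Lemma ystep {m n} (A : 'M[R]_(m, n)) (Fs : 'cV[R]_m -> \bar R) (mu sigma : R)
  (xt : 'cV[R]_n) (yk p w : 'cV[R]_m) (fp fw : R) :
  0 < sigma -> 0 < mu -> strongly_convex_e mu Fs -> (forall v, Fs v != -oo%E) ->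
  Fs p = fp%:E -> Fs w = fw%:E ->
  (forall y', (Fs p - (dotv p (A *m xt))%:E
                 + ((2 * sigma)^-1 * normv (p - yk) ^+ 2)%:E
       <= Fs y' - (dotv y' (A *m xt))%:E
                 + ((2 * sigma)^-1 * normv (y' - yk) ^+ 2)%:E)%E) ->
  fp - dotv p (A *m xt) + (2 * sigma)^-1 * normv (p - yk) ^+ 2
    + (mu + sigma^-1) / 2 * normv (w - p) ^+ 2
   <= fw - dotv w (A *m xt) + (2 * sigma)^-1 * normv (w - yk) ^+ 2.
Proof.
move=> s0 mu0 sc Fn Fp Fw hmin.
pose h := fun v => (Fs v - (mu / 2 * normv v ^+ 2)%R%:E)%E.
pose L := fun v => - dotv v (A *m xt) - sigma^-1 * dotv v yk
                   + (2 * sigma)^-1 * normv yk ^+ 2.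
have hc : convex_efun h := sc.
have hn : forall u, h u != -oo%E.
  by move=> u; rewrite /h; move: (Fn u); case: (Fs u).
have hL : affine_fun L.
  move=> u v t; rewrite /L !(dotvDl, dotvZl); ring.
have be0 : 0 <= mu + sigma^-1.
  have : 0 < sigma^-1 by rewrite invr_gt0.
  lra.
have hQ : forall v, - dotv v (A *m xt) + (2 * sigma)^-1 * normv (v - yk) ^+ 2 =
    (mu + sigma^-1) / 2 * normv v ^+ 2 - mu / 2 * normv v ^+ 2 + L v.
  move=> v; rewrite /L !normv2 !(dotvBl, dotvBr) (dotvC yk v).
  by rewrite invfM; lra.
have hm : forall u, ((fp - mu / 2 * normv p ^+ 2 +
     (mu + sigma^-1) / 2 * normv p ^+ 2 + L p)%:E <=
    h u + ((mu + sigma^-1) / 2 * normv u ^+ 2 + L u)%:E)%E.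
  move=> u; have := hmin u; rewrite /h Fp.
  move: (Fn u); case: (Fs u) => [fu| |] // _; last by move=> _; rewrite /= leey.
  rewrite /= !lee_fin => H.
  have := hQ u; have := hQ p; lra.
have := @strong_min _ _ h L (mu + sigma^-1) p w (fp - mu / 2 * normv p ^+ 2)
   (fw - mu / 2 * normv w ^+ 2) hc hn hL be0 _ _ hm.
rewrite /h Fp Fw /= => /(_ erefl erefl).
have := hQ p; have := hQ w; lra.
Qed.

Lemma key_ineq (s t op Aw2 w2 d s2 : R) : 0 < s -> 0 < t -> 0 <= w2 ->
  t * s * op ^+ 2 < 1 -> Aw2 <= op ^+ 2 * w2 ->
  0 <= s ^+ 2 * Aw2 - 2 * s * d + s2 ->
  d <= t^-1 / 2 * w2 + s^-1 / 2 * s2.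
Proof.
move=> s0 t0 w0 hts hA h.
have h1 : d <= s / 2 * Aw2 + s^-1 / 2 * s2.
  have s2p : 0 < 2 * s by lra.
  rewrite -(ler_pM2l s2p).
  have -> : 2 * s * (s / 2 * Aw2 + s^-1 / 2 * s2) = s ^+ 2 * Aw2 + s2.
    by field; rewrite gt_eqF.
  lra.
have h2 : s * Aw2 <= t^-1 * w2.
  rewrite -(ler_pM2l t0) !mulrA mulfV ?gt_eqF // mul1r.
  have : t * s * Aw2 <= t * s * (op ^+ 2 * w2).
    by rewrite ler_pM2l //; apply: mulr_gt0.
  have : t * s * op ^+ 2 * w2 <= w2 by nra.
  rewrite !mulrA; lra.
lra.
Qed.

Lemma conjN {m} (F : 'cV[R]_m -> \bar R) :
  proper_efun F -> forall y, conjugate F y != -oo%E.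
Proof.
move=> [Fn [x0 Fx0]] y.
have [f0 Hf0] : exists f0, F x0 = f0%:E.
  by move: (Fn x0) Fx0; case: (F x0) => // r _ _; exists r.
have : ((dotv y x0 - f0)%:E <= conjugate F y)%E.
  apply: le_ereal_sup_tmp; exists ((dotv y x0)%:E - F x0)%E.
    by exists x0.
  by rewrite Hf0.
by case: (conjugate F y).
Qed.

Lemma conj_some {m} (F : 'cV[R]_m -> \bar R) :
  proper_efun F -> convex_efun F -> lower_semicontinuous F ->
  exists y0 c, (conjugate F y0 <= c%:E)%E.
Proof.
move=> Fp Fc Fl; have [y0 [c Hc]] := conj_affine _ Fp Fc Fl.
exists y0, c; apply: ge_ereal_sup => _ [w _ <-]; exact: Hc.
Qed.

Lemma pinf_absurd (a b c d e : R) :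
  ~ (+oo + a%:E + b%:E <= c%:E + d%:E + e%:E)%E.
Proof. by rewrite !addye // leye_eq. Qed.

Lemma final_conv (t a1 f1 b1 a2 f2 b2 : R) :
  t <= (a1 - f1 + b1) - (a2 - f2 + b2) ->
  (t%:E <= ((a1%:E - f1%:E) + b1%:E) - ((a2%:E - f2%:E) + b2%:E))%E.
Proof. by move=> h /=; rewrite lee_fin. Qed.

Lemma sq_expand {k} (u v : 'cV[R]_k) (s : R) :
  0 <= s ^+ 2 * dotv u u - 2 * s * dotv u v + dotv v v.
Proof.
have := dotv_ge0 (s *: u - v).
rewrite dotvBl !dotvBr !dotvZl !dotvZr (dotvC v u); lra.
Qed.

End Steps.


Theorem mainTheorem5 (R : realType) (m n : nat) (A : 'M[R]_(m, n))
  (Rf : 'cV[R]_n -> R) (F : 'cV[R]_m -> \bar R) (rho mu tau sigma : R)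
  (x : nat -> 'cV[R]_n) (y : nat -> 'cV[R]_m) :
  0 <= rho -> 0 < mu ->
  weakly_convex rho Rf ->
  proper_efun F -> convex_efun F -> lower_semicontinuous F ->
  strongly_convex_e mu (conjugate F) ->
  0 < tau -> 0 < sigma ->
  tau * sigma * opnorm A ^+ 2 < 1 -> tau * rho < 1 -> mu * sigma > 3 ->
  pdhgm Rf A (conjugate F) tau sigma x y ->
  forall k : nat, (1 <= k)%N ->
    (lyap Rf A (conjugate F) tau sigma (x k, y k) (x k.-1, y k.-1)
       - lyap Rf A (conjugate F) tau sigma (x k.+1, y k.+1) (x k, y k)
     >= ((mu * sigma - 3) / 2 * (normv (y k - y k.+1) ^+ 2 / sigma)
         + (1 - rho * tau) / 2 * (normv (x k - x k.+1) ^+ 2 / tau))%:E)%E.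
Proof.
move=> rho0 mu0 wc Fp Fc Fl sc t0 s0 hop htr hms hpd k.
case: k => // j _ /=.
have FsN : forall v, conjugate F v != -oo%E := conjN F Fp.
have [y0 [c0 Hc0]] := conj_some F Fp Fc Fl.
have [fy0 Hy0] : exists f, conjugate F y0 = f%:E.
  exists (fine (conjugate F y0)); apply/esym/fineK; rewrite fin_numE FsN andTb.
  by apply/eqP => h; move: Hc0; rewrite h leye_eq.
have fin : forall i, exists f, conjugate F (y i.+1) = f%:E.
  move=> i; have [_ hy] := hpd i; have := hy y0.
  move: (FsN (y i.+1)); case: (conjugate F (y i.+1)) => [f| |] // _; first by exists f.
  by rewrite Hy0 => /pinf_absurd.
have [fq Hq] := fin j.
have [fr Hr] := fin j.+1.
have [hx _] := hpd j.+1.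
have X := xstep A Rf rho tau (y j.+1) (x j.+1) (x j.+2) (x j.+1) t0 htr wc hx.
have [_ hy] := hpd j.
have Y := ystep A (conjugate F) mu sigma (x j.+1 + (x j.+1 - x j)) (y j) (y j.+1) (y j.+2)
   fq fr s0 mu0 sc FsN Hq Hr hy.
rewrite /lyap /saddleL /= Hq Hr; apply: final_conv.
have K := key_ineq _ _ _ _ _ _ _ s0 t0 (dotv_ge0 _) hop (opnorm_sq A ((x j.+1) - (x j)))
   (sq_expand (A *m ((x j.+1) - (x j))) (((y j.+1) - (y j)) - ((y j.+2) - (y j.+1))) sigma).
have hU : 0 <= sigma^-1 * dotv ((y j.+2) - (y j.+1)) ((y j.+2) - (y j.+1)).
  by apply: mulr_ge0; [rewrite invr_ge0 ltW | exact: dotv_ge0].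
have T1 : (mu * sigma - 3) / 2 * (normv ((y j.+1) - (y j.+2)) ^+ 2 / sigma)
    = (mu / 2 - 3 / 2 * sigma^-1) * normv ((y j.+1) - (y j.+2)) ^+ 2.
  by field; rewrite gt_eqF.
have T2 : (1 - rho * tau) / 2 * (normv ((x j.+1) - (x j.+2)) ^+ 2 / tau)
    = (tau^-1 / 2 - rho / 2) * normv ((x j.+1) - (x j.+2)) ^+ 2.
  by field; rewrite gt_eqF.
rewrite T1 T2 /normM2 /=.
rewrite ?invfM in X Y.
rewrite ?normv2 in X Y *.
rewrite ?(mulmxDr, mulmxBr, mulmxN, dotvDl, dotvDr, dotvBl, dotvBr, dotvNl, dotvNr) in X Y K hU *.
have := dotvC (x j) (x j.+1); have := dotvC (x j) (x j.+2); have := dotvC (x j.+1) (x j.+2).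
have := dotvC (y j) (y j.+1); have := dotvC (y j) (y j.+2); have := dotvC (y j.+1) (y j.+2).
have := dotvC (A *m (x j)) (y j); have := dotvC (A *m (x j)) (y j.+1); have := dotvC (A *m (x j)) (y j.+2).
have := dotvC (A *m (x j.+1)) (y j); have := dotvC (A *m (x j.+1)) (y j.+1); have := dotvC (A *m (x j.+1)) (y j.+2).
have := dotvC (A *m (x j.+2)) (y j); have := dotvC (A *m (x j.+2)) (y j.+1); have := dotvC (A *m (x j.+2)) (y j.+2).
move=> *.
lra.
Qed.
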